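(* Let $(\Omega,\mathcal{M})$ be a measurable space, $f\in\mathcal{F}_1(a,b)$, and $w_0=f'_+(1)$ (the right derivative of $f$ at $1$). Suppose $w_0$ lies in the interior of $\{f^*<\infty\}$ and $f$ is strictly convex on a neighborhood of $1$. If $P_n,P$ are probability measures on $\Omega$ and either $D_f(P_n\|P)\to0$ or $D_f(P\|P_n)\to0$, then $P_n\to P$ setwise, i.e. $P_n(A)\to P(A)$ for all $A\in\mathcal{M}$. If moreover $\Omega$ is a metric space and $\mathcal{M}$ its Borel $\sigma$-algebra, then $P_n\to P$ weakly.
   Context: For $-\infty\le a<1<b\le\infty$, $\mathcal{F}_1(a,b)$ is the set of convex functions $f:(a,b)\to\mathbb{R}$ with $f(1)=0$; $f$ is extended to $[a,b]$ by continuity and set to $\infty$ outside $[a,b]$. The $f$-divergence of probability measures is $D_f(\nu\|\mu)=E_\mu[f(d\nu/d\mu)]$ if $\nu\ll\mu$ and $\infty$ otherwise. $f^*(y)=\sup_{z}\{yz-f(z)\}$ is the Legendre transform of $f$. *)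

(* Defs.v *)
From HB Require Import structures.
From mathcomp Require Import all_boot all_order all_algebra.
From mathcomp Require Import all_classical all_reals all_analysis.
Set Implicit Arguments. Unset Strict Implicit. Unset Printing Implicit Defensive.
Import Order.TTheory GRing.Theory Num.Theory.
Import numFieldNormedType.Exports.
Local Open Scope classical_set_scope.
Local Open Scope ring_scope.

Section fdiv_defs.
Context {R : realType}.

Definition oitv (a b : \bar R) : set R := [set x : R | (a < x%:E < b)%E].

Definition convex_on (f : R -> R) (I : set R) : Prop :=
  forall x y t, I x -> I y -> 0 <= t <= 1 ->
    f (t * x + (1 - t) * y) <= t * f x + (1 - t) * f y.

Definition strictly_convex_on (f : R -> R) (I : set R) : Prop :=
  forall x y t, I x -> I y -> x != y -> 0 < t < 1 ->
    f (t * x + (1 - t) * y) < t * f x + (1 - t) * f y.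

Definition F1 (a b : \bar R) (f : R -> R) : Prop :=
  [/\ (a < 1%:E)%E, (1%:E < b)%E, convex_on f (oitv a b) & f 1 = 0].

Definition fext (a b : \bar R) (f : R -> R) (x : R) : \bar R :=
  if (a < x%:E < b)%E then (f x)%:E
  else if a == x%:E then lim ((fun y => (f y)%:E) @ x^'+)
  else if b == x%:E then lim ((fun y => (f y)%:E) @ x^'-)
  else +oo%E.

Definition rderiv (f : R -> R) (x : R) : R :=
  lim ((fun h => (f (x + h) - f x) / h) @ 0^'+).

Definition legendre (a b : \bar R) (f : R -> R) (y : R) : \bar R :=
  ereal_sup (range (fun z : R => ((y * z)%:E - fext a b f z)%E)).

Definition fdiv d (T : measurableType d) (a b : \bar R) (f : R -> R)
    (nu mu : probability T R) : \bar R :=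
  if pselect (nu `<< mu) then
    (\int[mu]_x fext a b f (fine (Radon_Nikodym (charge_of_finite_measure nu) mu x)))%E
  else +oo%E.

End fdiv_defs.

(* Main.v *)
Require Import Defs.
From HB Require Import structures.
From mathcomp Require Import all_boot all_order all_algebra.
From mathcomp Require Import all_classical all_reals all_analysis.
Import Order.TTheory GRing.Theory Num.Theory.
Import numFieldNormedType.Exports.
Local Open Scope classical_set_scope.
Local Open Scope ring_scope.
From mathcomp Require Import ring lra measurable_realfun.

Lemma cvx3 {R : realType} {f : R -> R} {I : set R} x y z :
  convex_on f I -> I x -> I z -> x < y -> y < z ->
  f y * (z - x) <= (z - y) * f x + (y - x) * f z.
Proof.
move=> cf Ix Iz xy yz.
have zx : 0 < z - x by lra.
set t := (z - y) / (z - x).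
have t01 : 0 <= t <= 1.
  apply/andP; split; first by rewrite divr_ge0 //; lra.
  by rewrite ler_pdivrMr //; lra.
have := cf x z t Ix Iz t01.
have -> : t * x + (1 - t) * z = y.
  rewrite /t; field; lra.
move=> H.
have := ler_wpM2r (ltW zx) H.
have -> : (t * f x + (1 - t) * f z) * (z - x) = (z - y) * f x + (y - x) * f z.
  rewrite /t; field; lra.
done.
Qed.

Lemma scvx3 {R : realType} {f : R -> R} {I : set R} x y z :
  strictly_convex_on f I -> I x -> I z -> x < y -> y < z ->
  f y * (z - x) < (z - y) * f x + (y - x) * f z.
Proof.
move=> cf Ix Iz xy yz.
have zx : 0 < z - x by lra.
set t := (z - y) / (z - x).
have t01 : 0 < t < 1.
  apply/andP; split; first by rewrite divr_gt0 //; lra.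
  by rewrite ltr_pdivrMr //; lra.
have xz : x != z by rewrite lt_eqF //; lra.
have := cf x z t Ix Iz xz t01.
have -> : t * x + (1 - t) * z = y.
  rewrite /t; field; lra.
move=> H.
rewrite -(ltr_pM2r zx) in H.
have E : (t * f x + (1 - t) * f z) * (z - x) = (z - y) * f x + (y - x) * f z
  by rewrite /t; field; lra.
by rewrite -E.
Qed.

Lemma F1_1 {R : realType} {a b : \bar R} {f} : F1 a b f -> oitv a b 1.
Proof. by case=> ab1 b1 _ _; rewrite /oitv /= ab1 b1. Qed.

Lemma subgrad {R : realType} (a b : \bar R) f (e : R) : F1 a b f -> 0 < e ->
  [set x : R | 1 - e < x < 1 + e] `<=` oitv a b ->
  exists s, forall x, oitv a b x -> s * (x - 1) <= f x.
Proof.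
move=> hF e0 sub; have o1 := F1_1 hF.
case: hF => _ _ cf f1.
pose S := [set q : R | exists2 x, (oitv a b x /\ x < 1) & q = - f x / (1 - x)].
have ubS y : oitv a b y -> 1 < y -> ubound S (f y / (y - 1)).
  move=> oy y1 q [x [ox x1] ->].
  have := cvx3 x 1 y cf ox oy x1 y1; rewrite f1 mul0r => H.
  rewrite ler_pdivrMr; last lra.
  rewrite mulrAC ler_pdivlMr; last lra.
  lra.
have y0o : oitv a b (1 + e / 2) by apply: sub; rewrite /=; apply/andP; split; lra.
have x0o : oitv a b (1 - e / 2) by apply: sub; rewrite /=; apply/andP; split; lra.
have S0 : S !=set0.
  exists (- f (1 - e/2) / (1 - (1 - e/2))); exists (1 - e/2) => //; split => //; lra.
have hS : has_sup S.
  split => //; exists (f (1 + e/2) / (1 + e/2 - 1)); apply: ubS => //; lra.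
exists (sup S) => x ox.
have [x1|x1|->] := ltgtP x 1; last by rewrite subrr mulr0 f1.
- have : S (- f x / (1 - x)) by exists x.
  move/(sup_upper_bound hS).
  rewrite ler_pdivrMr; last lra.
  lra.
- have := ge_sup S0 (ubS x ox x1).
  rewrite ler_pdivlMr; last lra.
  done.
Qed.

Definition Hf {R : realType} (f : R -> R) (s x : R) := f x - s * (x - 1).

Lemma Hcvx {R : realType} {f : R -> R} {I : set R} (s x y z : R) :
  convex_on f I -> I x -> I z -> x < y -> y < z ->
  Hf f s y * (z - x) <= (z - y) * Hf f s x + (y - x) * Hf f s z.
Proof.
move=> cf Ix Iz xy yz; have := cvx3 x y z cf Ix Iz xy yz; rewrite /Hf.
have E : s * (y - 1) * (z - x) = (z - y) * (s * (x - 1)) + (y - x) * (s * (z - 1))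
  by ring.
move=> H.
nra.
Qed.

Lemma Hscvx {R : realType} {f : R -> R} {I : set R} (s x y z : R) :
  strictly_convex_on f I -> I x -> I z -> x < y -> y < z ->
  Hf f s y * (z - x) < (z - y) * Hf f s x + (y - x) * Hf f s z.
Proof.
move=> cf Ix Iz xy yz; have := scvx3 x y z cf Ix Iz xy yz; rewrite /Hf.
have E : s * (y - 1) * (z - x) = (z - y) * (s * (x - 1)) + (y - x) * (s * (z - 1))
  by ring.
move=> H.
nra.
Qed.

Lemma H1 {R : realType} {f : R -> R} s : f 1 = 0 -> Hf f s 1 = 0.
Proof. by move=> f1; rewrite /Hf f1 subrr mulr0 subr0. Qed.

Lemma Hup {R : realType} {a b : \bar R} {f : R -> R} (s d x : R) :
  convex_on f (oitv a b) -> f 1 = 0 -> oitv a b 1 -> 0 < d ->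
  oitv a b x -> 1 + d <= x -> Hf f s (1 + d) * (x - 1) <= d * Hf f s x.
Proof.
move=> cf f1 o1 d0 ox; rewrite le_eqVlt => /predU1P[<-|dx].
  by rewrite addrAC subrr add0r mulrC.
have := Hcvx s 1 (1 + d) x cf o1 ox ltac:(lra) dx.
rewrite (H1 s f1) mulr0 add0r; have -> : 1 + d - 1 = d by ring.
done.
Qed.

Lemma Hdown {R : realType} {a b : \bar R} {f : R -> R} (s d x : R) :
  convex_on f (oitv a b) -> f 1 = 0 -> oitv a b 1 -> 0 < d ->
  oitv a b x -> x <= 1 - d -> Hf f s (1 - d) * (1 - x) <= d * Hf f s x.
Proof.
move=> cf f1 o1 d0 ox; rewrite le_eqVlt => /predU1P[->|dx].
  have -> : 1 - (1 - d) = d by ring.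
  by rewrite mulrC.
have := Hcvx s x (1 - d) 1 cf ox o1 dx ltac:(lra).
rewrite (H1 s f1) mulr0 addr0; have -> : 1 - (1 - d) = d by ring.
done.
Qed.

Lemma Hpos {R : realType} {f : R -> R} (s e d : R) :
  strictly_convex_on f [set x : R | 1 - e < x < 1 + e] -> f 1 = 0 ->
  (forall x, 1 - e < x < 1 + e -> 0 <= Hf f s x) ->
  0 < d < e -> 0 < Hf f s (1 + d) /\ 0 < Hf f s (1 - d).
Proof.
move=> scf f1 H0 /andP[d0 de].
have I1 : 1 - e < 1 < 1 + e by apply/andP; split; lra.
split.
- have := Hscvx s 1 (1 + d/2) (1 + d) scf I1 ltac:(apply/andP; split; lra)
    ltac:(lra) ltac:(lra).
  rewrite (H1 s f1) mulr0 add0r.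
  have := H0 (1 + d/2) ltac:(apply/andP; split; lra).
  move=> h1 h2.
  have h3 : 0 <= Hf f s (1 + d / 2) * (1 + d - 1) by apply: mulr_ge0 => //; lra.
  have h4 : 0 < (1 + d / 2 - 1) * Hf f s (1 + d) by lra.
  by move: h4; rewrite pmulr_rgt0 //; lra.
- have := Hscvx s (1 - d) (1 - d/2) 1 scf ltac:(apply/andP; split; lra) I1
    ltac:(lra) ltac:(lra).
  rewrite (H1 s f1) mulr0 addr0.
  have := H0 (1 - d/2) ltac:(apply/andP; split; lra).
  move=> h1 h2.
  have h3 : 0 <= Hf f s (1 - d / 2) * (1 - (1 - d)) by apply: mulr_ge0 => //; lra.
  have h4 : 0 < (1 - d / 2 - (1 - d)) * Hf f s (1 - d) by lra.
  by move: h4; rewrite pmulr_rgt0 //; lra.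
Qed.

Lemma Hpoint {R : realType} {a b : \bar R} {f : R -> R} (s d m x : R) :
  convex_on f (oitv a b) -> f 1 = 0 -> oitv a b 1 -> 0 < d ->
  (forall y, oitv a b y -> 0 <= Hf f s y) ->
  oitv a b (1 + d) -> oitv a b (1 - d) ->
  0 <= m -> m <= Hf f s (1 + d) -> m <= Hf f s (1 - d) ->
  oitv a b x -> m * (`|x - 1| - d) <= d * Hf f s x.
Proof.
move=> cf f1 o1 d0 H0 od1 od2 m0 m1 m2 ox.
have Hx := H0 x ox.
have [xu|xu] := leP (1 + d) x.
  have := Hup s d x cf f1 o1 d0 ox xu.
  rewrite ger0_norm; last lra.
  have h : m * (x - 1) <= Hf f s (1 + d) * (x - 1) by apply: ler_wpM2r => //; lra.
  move=> h'; have h'' : m * (x - 1 - d) <= m * (x - 1) by apply: ler_wpM2l => //; lra.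
  lra.
have [xl|xl] := leP x (1 - d).
  have := Hdown s d x cf f1 o1 d0 ox xl.
  rewrite ler0_norm; last lra.
  have h : m * (1 - x) <= Hf f s (1 - d) * (1 - x) by apply: ler_wpM2r => //; lra.
  move=> h'; have h'' : m * (- (x - 1) - d) <= m * (1 - x) by apply: ler_wpM2l => //; lra.
  lra.
have : `|x - 1| - d <= 0.
  have [x1|x1] := leP 0 (x - 1).
    by rewrite ger0_norm //; lra.
  by rewrite ltr0_norm //; lra.
move=> h; have : m * (`|x - 1| - d) <= 0 by apply: mulr_ge0_le0.
have : 0 <= d * Hf f s x by apply: mulr_ge0 => //; lra.
lra.
Qed.

Lemma Hmono_l {R : realType} {a b : \bar R} {f : R -> R} (s y z : R) :
  convex_on f (oitv a b) -> f 1 = 0 -> oitv a b 1 ->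
  (forall y, oitv a b y -> 0 <= Hf f s y) ->
  oitv a b y -> y <= z -> z < 1 -> Hf f s z <= Hf f s y.
Proof.
move=> cf f1 o1 H0 oy; rewrite le_eqVlt => /predU1P[-> //|yz] z1.
have := Hcvx s y z 1 cf oy o1 yz z1; rewrite (H1 s f1) mulr0 addr0 => h.
have := H0 y oy => h0.
have h2 : (1 - z) * Hf f s y <= (1 - y) * Hf f s y by apply: ler_wpM2r => //; lra.
have h3 : Hf f s z * (1 - y) <= Hf f s y * (1 - y) by rewrite [X in _ <= X]mulrC; lra.
by rewrite ler_pM2r in h3 => //; lra.
Qed.

Lemma Hmono_r {R : realType} {a b : \bar R} {f : R -> R} (s y z : R) :
  convex_on f (oitv a b) -> f 1 = 0 -> oitv a b 1 ->
  (forall y, oitv a b y -> 0 <= Hf f s y) ->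
  oitv a b z -> 1 < y -> y <= z -> Hf f s y <= Hf f s z.
Proof.
move=> cf f1 o1 H0 oz y1; rewrite le_eqVlt => /predU1P[-> //|yz].
have := Hcvx s 1 y z cf o1 oz y1 yz; rewrite (H1 s f1) mulr0 add0r => h.
have := H0 z oz => h0.
have h2 : (y - 1) * Hf f s z <= (z - 1) * Hf f s z by apply: ler_wpM2r => //; lra.
have h3 : Hf f s y * (z - 1) <= Hf f s z * (z - 1) by rewrite [X in _ <= X]mulrC; lra.
by rewrite ler_pM2r in h3 => //; lra.
Qed.


Lemma affine_cvg_r {R : realType} (p q ra : R) :
  (fun y => ((p * y + q)%:E)%E) @ ra^'+ --> ((p * ra + q)%:E)%E.
Proof.
have h : (fun y => p * y + q) @ ra^'+ --> p * ra + q.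
  apply: cvg_at_right_filter; apply: cvgD; last exact: cvg_cst.
  by apply: cvgMr; exact: cvg_id.
apply: cvg_EFin; first by near=> y.
exact: h.
Unshelve. all: end_near. Qed.

Lemma mono_lim {R : realType} (G : R -> R) (ra c p q : R) : ra < c ->
  (forall y z, ra < y -> y <= z -> z < c -> G z <= G y) ->
  (forall y, ra < y < c -> p * y + q <= G y) ->
  exists L : \bar R, ((G y)%:E @[y --> ra^'+] --> L /\ ((p * ra + q)%:E <= L))%E.
Proof.
move=> rc Gm Gl.
have ab : (BRight ra < BLeft c)%O by rewrite bnd_simp.
have hni : {in Interval (BRight ra) (BLeft c) &, nonincreasing_fun (fun y => (G y)%:E)}.
  move=> y z; rewrite !in_itv /= => /andP[ry yc] /andP[rz zc] yz.
  by rewrite lee_fin; apply: Gm.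
have := nonincreasing_at_right_cvge (BLeft c) ab hni.
set L := ereal_sup _ => hL; exists L; split => //.
apply: (lee_cvg_to (affine_cvg_r p q ra) hL).
near=> y; rewrite lee_fin; apply: Gl; apply/andP; split.
  by near: y; exact: nbhs_right_gt.
by near: y; exact: nbhs_right_lt.
Unshelve. all: end_near. Qed.

Lemma pointwise_bound {R : realType} (a b : \bar R) (f : R -> R) (s d m : R) :
  F1 a b f -> (forall x, oitv a b x -> s * (x - 1) <= f x) -> 0 < d -> 0 < m ->
  (forall x, oitv a b x -> m * (`|x - 1| - d) <= d * Hf f s x) ->
  forall x : R, ((m * (`|x - 1| - d))%:E <= d%:E * (fext a b f x - (s * (x - 1))%:E))%E.
Proof.
move=> hF hs d0 m0 P x.
have o1 := F1_1 hF.
case: hF => a1 b1 cf f1.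
have H0 : forall y, oitv a b y -> 0 <= Hf f s y by move=> y oy; rewrite /Hf subr_ge0; exact: hs.
rewrite /fext; case: ifP => [ox|nox].
  by rewrite -EFinB -EFinM lee_fin; exact: P.
case: ifP => [/eqP ax|nax].
  have x1 : x < 1 by rewrite -lte_fin -ax.
  have oy y : x < y -> y < 1 -> oitv a b y.
    move=> xy y1; rewrite /oitv /= ax lte_fin xy /=.
    by rewrite (lt_trans _ b1) // lte_fin.
  have Gl : forall y, x < y < 1 -> - (m / d) * y + m / d * (1 - d) <= Hf f s y.
    move=> y /andP[xy y1]; have := P y (oy y xy y1).
    rewrite ltr0_norm; last lra.
    move=> h; rewrite -ler_pdivrMl // in h.
    suff -> : - (m / d) * y + m / d * (1 - d) = d^-1 * (m * (- (y - 1) - d)) by [].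
    by field; lra.
  have [L [hL Lge]] := @mono_lim _ (Hf f s) x 1 (- (m / d)) (m / d * (1 - d)) x1
    (fun y z xy yz z1 => Hmono_l s y z cf f1 o1 H0 (oy y xy (le_lt_trans yz z1)) yz z1)
    Gl.
  have hf : ((f y)%:E @[y --> x^'+] --> L + (s * (x - 1))%:E)%E.
      have e1 : (fun y => (f y)%:E) = (fun y => (Hf f s y)%:E + (s * y + - s)%:E)%E.
        by apply: funext => y; rewrite /Hf -EFinD; congr (_%:E); ring.
      rewrite e1; apply: cvgeD => //; first exact: fin_num_adde_defl.
      have -> : s * (x - 1) = s * x + - s by ring.
      exact: affine_cvg_r.
    rewrite (cvg_lim _ hf) // addeK //.
    have := @lee_wpmul2l _ d%:E ltac:(rewrite lee_fin; lra) _ _ Lge.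
    apply: le_trans; rewrite -EFinM lee_fin ltr0_norm; last lra.
    by rewrite le_eqVlt; apply/orP; left; apply/eqP; field; lra.
case: ifP => [/eqP bx|nbx]; last first.
  rewrite gt0_muley; [exact: leey|].
  by rewrite /= lte_fin.
have x1 : 1 < x by rewrite -lte_fin -bx.
have oy y : 1 < y -> y < x -> oitv a b y.
  move=> y1 yx; rewrite /oitv /= bx lte_fin yx andbT.
  by rewrite (lt_trans a1) // lte_fin.
have Gl : forall y, - x < y < - 1 ->
    - (m / d) * y + - (m / d) * (1 + d) <= Hf f s (- y).
  move=> y /andP[xy y1]; have := P (- y) (oy (- y) ltac:(lra) ltac:(lra)).
  rewrite ger0_norm; last lra.
  move=> h; rewrite -ler_pdivrMl // in h.
  suff -> : - (m / d) * y + - (m / d) * (1 + d) = d^-1 * (m * (- y - 1 - d)) by [].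
  by field; lra.
have Gm : forall y z, - x < y -> y <= z -> z < - 1 -> Hf f s (- z) <= Hf f s (- y).
  move=> y z xy yz z1.
  apply: (Hmono_r s (- z) (- y) cf f1 o1 H0); [apply: oy|..]; lra.
have [L [hL Lge]] := @mono_lim _ (fun y => Hf f s (- y)) (- x) (- 1)
  (- (m / d)) (- (m / d) * (1 + d)) ltac:(lra) Gm Gl.
have hf : ((f y)%:E @[y --> x^'-] --> L + (s * (x - 1))%:E)%E.
  apply/cvg_at_leftNP.
  have e1 : ((fun y => (f y)%:E) \o -%R) = (fun y => (Hf f s (- y))%:E + (- s * y + - s)%:E)%E.
    by apply: funext => y; rewrite /Hf /= -EFinD; congr (_%:E); ring.
  rewrite e1; apply: cvgeD => //; first exact: fin_num_adde_defl.
  have -> : s * (x - 1) = - s * - x + - s by ring.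
  exact: affine_cvg_r.
rewrite (cvg_lim _ hf) // addeK //.
have := @lee_wpmul2l _ d%:E ltac:(rewrite lee_fin; lra) _ _ Lge.
apply: le_trans; rewrite -EFinM lee_fin ger0_norm; last lra.
by rewrite le_eqVlt; apply/orP; left; apply/eqP; field; lra.
Qed.


Lemma oitv_interval {R : realType} (a b : \bar R) : is_interval (oitv a b).
Proof.
move=> x y /andP[ax xb] /andP[ay yb] z /andP[xz zy]; apply/andP; split.
  by rewrite (lt_le_trans ax) // lee_fin.
by rewrite (le_lt_trans _ yb) // lee_fin.
Qed.

Lemma oitv_measurable {R : realType} (a b : \bar R) : measurable (oitv a b).
Proof. apply: is_interval_measurable. exact: oitv_interval. Qed.

Lemma cvx_measurable {R : realType} (a b : \bar R) (f : R -> R) :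
  convex_on f (oitv a b) -> measurable_fun (oitv a b) f.
Proof.
move=> cf.
apply: (measurability (@RGenInftyO.G R)) => [|/= _ [_] [r] -> <-].
  exact: RGenInftyO.measurableE.
apply: is_interval_measurable; apply/is_intervalPlt.
move=> x y [ox fx] [oy fy] z /andP[xz zy]; split.
  by apply: (@oitv_interval _ a b x y ox oy); rewrite !ltW.
move: fx fy; rewrite /= !in_itv /= => fx fy.
have := cvx3 x z y cf ox oy xz zy => h.
have h2 : (y - z) * f x + (z - x) * f y < (y - z) * r + (z - x) * r.
  apply: ltr_leD; first by rewrite ltr_pM2l //; lra.
  by rewrite ler_pM2l ?ltW //; lra.
have : f z * (y - x) < r * (y - x) by lra.
by rewrite ltr_pM2r //; lra.
Qed.

Lemma eq_measurable_bool {R : realType} (a : \bar R) :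
  measurable_fun [set: R] (fun x : R => a == x%:E).
Proof.
apply: (@measurable_fun_bool _ _ _ _ true); rewrite setTI.
case: a => [ra| |].
- rewrite (_ : _ @^-1` _ = [set ra]); first exact: measurable_set1.
  apply/seteqP; split => x /=; first by move/eqP => [->].
  by move=> ->; rewrite eqxx.
- have -> : (fun x : R => +oo%E == x%:E) @^-1` [set true] = set0.
    by apply/seteqP; split => x //=.
  exact: measurable0.
- have -> : (fun x : R => -oo%E == x%:E) @^-1` [set true] = set0.
    by apply/seteqP; split => x //=.
  exact: measurable0.
Qed.

Lemma measurable_fun_sub1 {R : realType} (D : set R) (g : R -> \bar R) :
  (forall x y, D x -> D y -> x = y) -> measurable_fun D g.
Proof.
move=> hD mD Y mY.
have [[x0 [Dx0 Yx0]]|nx] := pselect (exists x, D x /\ Y (g x)).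
  rewrite (_ : _ `&` _ = D) //; apply/seteqP; split => y; first by case.
  by move=> Dy; split => //; rewrite /preimage /= (hD y x0).
rewrite (_ : _ `&` _ = set0); first exact: measurable0.
by apply/seteqP; split => y // [Dy Yy]; apply: nx; exists y.
Qed.

Lemma fext_measurable {R : realType} (a b : \bar R) (f : R -> R) :
  convex_on f (oitv a b) -> measurable_fun [set: R] (fext a b f).
Proof.
move=> cf; rewrite /fext.
apply: measurable_fun_if => //.
- apply: (@measurable_fun_bool _ _ _ _ true); rewrite setTI.
  exact: oitv_measurable.
- rewrite setTI (_ : _ @^-1` _ = oitv a b); last by [].
  by apply/measurable_EFinP; exact: cvx_measurable.
- apply: (measurable_funS measurableT) => //.
  apply: measurable_fun_if => //.
  + exact: eq_measurable_bool.
  + apply: measurable_fun_sub1 => x y [_ /eqP ->] [_ /eqP] [->] //.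
  + apply: (measurable_funS measurableT) => //.
    apply: measurable_fun_if => //.
    * exact: eq_measurable_bool.
    * apply: measurable_fun_sub1 => x y [_ /eqP ->] [_ /eqP] [->] //.
Qed.


Lemma integral_ge_int {d} {T : measurableType d} {R : realType}
  {mu : {measure set T -> \bar R}} {G B : T -> \bar R} :
  measurable_fun setT G -> mu.-integrable setT B -> (forall x, (B x <= G x)%E) ->
  (\int[mu]_x B x <= \int[mu]_x G x)%E.
Proof.
move=> mG iB BG.
have mB := measurable_int _ iB.
rewrite (integralE mu setT G) (integralE mu setT B).
apply: leeB.
  apply: ge0_le_integral => //.
  - exact: measurable_funepos.
  - exact: measurable_funepos.
  - move=> x _; rewrite !funeposE; apply: leU2 => //.
apply: ge0_le_integral => //.
- exact: measurable_funeneg.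
- exact: measurable_funeneg.
- move=> x _; rewrite !funenegE; apply: leU2 => //.
  by rewrite leeN2; exact: BG.
Qed.

Section rn.
Local Open Scope ereal_scope.
Local Open Scope charge_scope.

Lemma rn_facts {d} {T : measurableType d} {R : realType} {nu mu : probability T R} :
  nu `<< mu ->
  [/\ (forall w, 'd (charge_of_finite_measure nu) '/d mu w =
                  (fine ('d (charge_of_finite_measure nu) '/d mu w))%:E),
     measurable_fun setT (fun w => fine ('d (charge_of_finite_measure nu) '/d mu w)),
     mu.-integrable setT (fun w => (fine ('d (charge_of_finite_measure nu) '/d mu w))%:E) &
     \int[mu]_w (fine ('d (charge_of_finite_measure nu) '/d mu w))%:E = 1].
Proof.
move=> numu.
have numu' : charge_of_finite_measure nu `<< mu by [].
have rE w : 'd (charge_of_finite_measure nu) '/d mu w =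
   (fine ('d (charge_of_finite_measure nu) '/d mu w))%:E.
  by rewrite fineK //; exact: Radon_Nikodym_fin_num.
have hE : (fun w => (fine ('d (charge_of_finite_measure nu) '/d mu w))%:E) =
   'd (charge_of_finite_measure nu) '/d mu by apply: funext => w; rewrite -rE.
split => //.
- apply: measurableT_comp => //; exact: fine_measurable.
- by rewrite hE; exact: Radon_Nikodym_integrable.
- rewrite hE -Radon_Nikodym_integral //.
  exact: probability_setT.
Qed.

End rn.

Section L1.
Local Open Scope ereal_scope.
Local Open Scope charge_scope.

Definition rho {d} {T : measurableType d} {R : realType} (nu mu : probability T R) (w : T) : R :=
  fine ('d (charge_of_finite_measure nu) '/d mu w).

Lemma rho_int {d} {T : measurableType d} {R : realType} {nu mu : probability T R} :
  nu `<< mu -> mu.-integrable setT (fun w => (`|rho nu mu w - 1|)%:E).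
Proof.
move=> numu; have [_ _ ir _] := rn_facts numu.
have := integrable_abse (integrableB measurableT ir
   (finite_measure_integrable_cst mu 1 measurableT)).
apply: eq_integrable => // w _; by rewrite /= -EFinB.
Qed.

Lemma L1_bound d (T : measurableType d) (R : realType) (a b : \bar R) f (s dl m : R) :
  F1 a b f -> (0 < dl)%R -> (0 < m)%R ->
  (forall x, ((m * (`|x - 1| - dl))%:E <= dl%:E * (fext a b f x - (s * (x - 1))%:E))) ->
  forall nu mu : probability T R, nu `<< mu ->
  (m / dl)%:E * (\int[mu]_w (`|rho nu mu w - 1|)%:E - dl%:E) <= fdiv a b f nu mu.
Proof.
move=> hF dl0 m0 pb nu mu numu.
have [rE mr ir Ir] := rn_facts numu.
have [_ _ cf _] := hF.
rewrite /fdiv; destruct (pselect (nu `<< mu)) as [hnm|]; last by [].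
set k := (m / dl)%R.
have k0 : (0 < k)%R by rewrite divr_gt0.
pose B w := k%:E * (`|rho nu mu w - 1|)%:E +
   (s%:E * (rho nu mu w)%:E + (- (k * dl) - s)%:E).
have iA := rho_int numu.
have iB1 : mu.-integrable setT (fun w => k%:E * (`|rho nu mu w - 1|)%:E).
  exact: integrableZl.
have iB2 : mu.-integrable setT (fun w => s%:E * (rho nu mu w)%:E).
  exact: integrableZl.
have iB3 : mu.-integrable setT (fun w => (- (k * dl) - s)%:E).
  exact: (finite_measure_integrable_cst mu _ measurableT).
have iB23 : mu.-integrable setT (fun w => s%:E * (rho nu mu w)%:E + (- (k * dl) - s)%:E).
  exact: (integrableD measurableT iB2 iB3).
have iB : mu.-integrable setT B by exact: (integrableD measurableT iB1 iB23).
have IB : \int[mu]_w B w = k%:E * \int[mu]_w (`|rho nu mu w - 1|)%:E + (s%:E + (- (k * dl) - s)%:E).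
  rewrite /B integralD //; congr (_ + _); first by rewrite integralZl.
  rewrite integralD // integralZl //; congr (_ + _); first by rewrite Ir mule1.
  rewrite integral_cst // -[RHS]mule1; congr (_ * _); exact: probability_setT.
have mG : measurable_fun setT (fun w => fext a b f (rho nu mu w)).
  exact: measurableT_comp (fext_measurable _ _ _ cf) mr.
have BG w : B w <= fext a b f (rho nu mu w).
  have := pb (rho nu mu w); rewrite /B.
  case: (fext a b f (rho nu mu w)) => [r| |] h.
  - rewrite -!EFinM -!EFinD lee_fin.
    rewrite -EFinB -EFinM lee_fin in h.
    have h2 : (k * (`|rho nu mu w - 1| - dl) <= r - s * (rho nu mu w - 1))%R.
      by rewrite /k mulrAC ler_pdivrMr // [X in (_ <= X)%R]mulrC.
    have e : (k * dl = m)%R by rewrite /k; field; lra.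
    nra.
  - exact: leey.
  - by move: h; rewrite /= gt0_muleNy ?lte_fin // leeNy_eq.
have := integral_ge_int mG iB BG.
rewrite IB; apply: le_trans.
have hfin := integrable_fin_num measurableT iA.
rewrite -(fineK hfin) -EFinB -!EFinM -!EFinD lee_fin.
nra.
Qed.

End L1.

Section diff.
Local Open Scope ereal_scope.
Local Open Scope charge_scope.


Lemma diff_bound {d} {T : measurableType d} {R : realType} (nu mu : probability T R)
  (g : T -> R) (M : R) :
  nu `<< mu -> measurable_fun setT g -> (forall x, (`|g x| <= M)%R) ->
  `|\int[nu]_x (g x)%:E - \int[mu]_x (g x)%:E| <=
    M%:E * \int[mu]_w (`|rho nu mu w - 1|)%:E.
Proof.
move=> numu mg hM.
have [rE mr ir Ir] := rn_facts numu.
have bg : [bounded g x | x in setT].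
  exists M; split; first exact: num_real.
  by move=> x Mx y _ /=; exact: le_trans (hM y) (ltW Mx).
have ign : nu.-integrable setT (EFin \o g).
  apply: measurable_bounded_integrable => //.
  exact: fin_num_fun_lty (fin_num_measure _).
have igm : mu.-integrable setT (EFin \o g).
  apply: measurable_bounded_integrable => //.
  exact: fin_num_fun_lty (fin_num_measure _).
have igr : mu.-integrable setT (EFin \o (fun x => g x * rho nu mu x)%R).
  have := integrableMr measurableT mg bg ir.
  by apply: eq_integrable => // x _; rewrite /= EFinM.
have -> : \int[nu]_x (g x)%:E = \int[mu]_x (g x * rho nu mu x)%:E.
  rewrite -(Radon_Nikodym_change_of_variables numu measurableT ign).
  by apply: eq_integral => x _; rewrite /= rE EFinM.
rewrite -integralB_EFin //.
have mF : measurable_fun setT (fun x => (g x * rho nu mu x)%:E - (g x)%:E).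
  apply: emeasurable_funB.
    by apply/measurable_EFinP; apply: measurable_funM.
  exact/measurable_EFinP.
apply: le_trans (le_abse_integral _ _ mF) _ => //.
rewrite -integralZl //; last exact: rho_int.
apply: ge0_le_integral => //.
- exact: measurableT_comp.
- apply: emeasurable_funM => //; apply/measurable_EFinP.
  by apply: measurableT_comp => //; apply: measurable_funB.
- move=> x _; rewrite -EFinB /= -EFinM lee_fin.
  have -> : (g x * rho nu mu x - g x = g x * (rho nu mu x - 1))%R by ring.
  by rewrite normrM ler_wpM2r.
Qed.

End diff.


Lemma exists_m {R : realType} (a b : \bar R) (f : R -> R) (e s : R) :
  F1 a b f -> 0 < e -> [set x : R | 1 - e < x < 1 + e] `<=` oitv a b ->
  strictly_convex_on f [set x : R | 1 - e < x < 1 + e] ->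
  (forall x, oitv a b x -> s * (x - 1) <= f x) ->
  forall dl, 0 < dl < e -> exists2 m, 0 < m &
    forall x : R, ((m * (`|x - 1| - dl))%:E <= dl%:E * (fext a b f x - (s * (x - 1))%:E))%E.
Proof.
move=> hF e0 sub scf hs dl /andP[dl0 dle].
have o1 := F1_1 hF.
have [_ _ cf f1] := hF.
have H0 y : oitv a b y -> 0 <= Hf f s y by move=> oy; rewrite /Hf subr_ge0; exact: hs.
have [p1 p2] := Hpos s e dl scf f1 (fun x hx => H0 x (sub x hx)) ltac:(apply/andP; split => //).
pose m := Num.min (Hf f s (1 - dl)) (Hf f s (1 + dl)).
have m0 : 0 < m by rewrite /m lt_min p1 p2.
exists m => //.
apply: pointwise_bound => // x ox.
apply: (@Hpoint _ a b) => //.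
- by apply: sub; rewrite /=; apply/andP; split; lra.
- by apply: sub; rewrite /=; apply/andP; split; lra.
- exact: ltW.
- by rewrite /m ge_min lexx orbT.
- by rewrite /m ge_min lexx.
Qed.

Section est.
Local Open Scope ereal_scope.

Lemma est {d} {T : measurableType d} {R : realType} (a b : \bar R) (f : R -> R)
  (s dl m M : R) (g : T -> R) :
  F1 a b f -> (0 < dl)%R -> (0 < m)%R -> (0 < M)%R ->
  (forall x : R, ((m * (`|x - 1| - dl))%:E <= dl%:E * (fext a b f x - (s * (x - 1))%:E))) ->
  measurable_fun setT g -> (forall x, (`|g x| <= M)%R) ->
  forall nu mu : probability T R,
  `|\int[nu]_x (g x)%:E - \int[mu]_x (g x)%:E| <=
    M%:E * (dl%:E + (dl / m)%:E * fdiv a b f nu mu).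
Proof.
move=> hF dl0 m0 M0 pb mg hM nu mu.
have [numu|nnumu] := pselect (nu `<< mu); last first.
  rewrite /fdiv; destruct (pselect (nu `<< mu)) as [h|h]; first by [].
  rewrite gt0_muley ?lte_fin ?divr_gt0 // addey // gt0_muley ?lte_fin //.
  exact: leey.
have h1 := @diff_bound _ _ _ nu mu g M numu mg hM.
have h2 := @L1_bound d T R a b f s dl m hF dl0 m0 pb nu mu numu.
apply: le_trans h1 _; apply: lee_wpmul2l; first by rewrite lee_fin ltW.
have fin := integrable_fin_num measurableT (rho_int numu).
move: h2; case: (fdiv a b f nu mu) => [r| |] h2.
- rewrite -(fineK fin) in h2 *; rewrite -EFinB -EFinM lee_fin in h2.
  rewrite -EFinM -EFinD lee_fin.
  set i := fine _ in h2 *.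
  have : (i - dl <= dl / m * r)%R.
    rewrite -(ler_pM2l (_ : 0 < m / dl)%R); last by rewrite divr_gt0.
    have -> : (m / dl * (dl / m * r) = r)%R by field; apply/andP; split; lra.
    done.
  lra.
- by rewrite gt0_muley ?lte_fin ?divr_gt0 // addey // leey.
- by move: h2; rewrite -(fineK fin) -EFinB -EFinM leeNy_eq.
Qed.

Lemma abseC {R : realType} (x y : \bar R) : x \is a fin_num -> y \is a fin_num ->
  `|x - y| = `|y - x|.
Proof.
move=> fx fy; rewrite -(fineK fx) -(fineK fy) -!EFinB /=.
by rewrite distrC.
Qed.

Lemma conv_lemma {R : realType} (u : nat -> \bar R) (r : R) (D : nat -> \bar R) (M e : R) :
  (0 < M)%R -> (0 < e)%R -> D n @[n --> \oo] --> 0 ->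
  (forall dl, (0 < dl < e)%R -> exists2 C, (0 <= C)%R &
     forall n, `|u n - r%:E| <= M%:E * (dl%:E + C%:E * D n)) ->
  u n @[n --> \oo] --> r%:E.
Proof.
move=> M0 e0 /fine_cvgP[Dfin Dcv] H.
have [C0 C00 HC0] := H (e / 2)%R ltac:(apply/andP; split; lra).
have ufin : \forall n \near \oo, u n \is a fin_num.
  near=> n.
  have hDn : D n \is a fin_num by near: n.
  have := HC0 n; rewrite -(fineK hDn) -EFinM.
  move=> /(le_lt_trans)/(_ (ltry _)); rewrite -fin_num_abs fin_numB.
  by case/andP.
apply/fine_cvgP; split => //.
apply/cvgrPdist_le => eps eps0.
pose dl : R := (Num.min (e / 2) (eps / (2 * M)))%R.
have dl0 : (0 < dl)%R by rewrite lt_min divr_gt0 // divr_gt0 // mulr_gt0.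
have dle : (dl < e)%R by rewrite /dl gt_min; apply/orP; left; lra.
have [C Cge HC] := H dl ltac:(apply/andP; split => //).
have := Dcv; move/cvgrPdist_le => /(_ (eps / (2 * M * (C + 1)))%R).
have h0 : (0 < eps / (2 * M * (C + 1)))%R.
  by rewrite divr_gt0 // mulr_gt0 // ?mulr_gt0 //; lra.
move=> /(_ h0) hD.
near=> n.
have hDn : D n \is a fin_num by near: n.
have hun : u n \is a fin_num by near: n.
have hdn : (`|0 - fine (D n)| <= eps / (2 * M * (C + 1)))%R by near: n.
have := HC n; rewrite -(fineK hDn) -(fineK hun) -EFinB -EFinM /= lee_fin.
rewrite sub0r normrN in hdn.
rewrite distrC; set x := fine (u n); set y := fine (D n) in hdn *.
move=> hb.
have hy : (C * y <= C * (eps / (2 * M * (C + 1))))%R.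
  apply: ler_wpM2l => //; exact: le_trans (ler_norm y) hdn.
have e1 : (M * (C * (eps / (2 * M * (C + 1)))) <= eps / 2)%R.
  rewrite mulrA [X in (X <= _)%R](_ : _ = (eps / 2) * (C / (C + 1)))%R; last by field; lra.
  apply: ler_piMr; first lra.
  by rewrite ler_pdivrMr ?mul1r; lra.
have e2 : (M * dl <= eps / 2)%R.
  rewrite -ler_pdivlMl // /dl ge_min; apply/orP; right.
  by rewrite le_eqVlt; apply/orP; left; apply/eqP; field; lra.
have e3 : (M * (dl + C * y) <= M * dl + M * (C * (eps / (2 * M * (C + 1)))))%R.
  by rewrite mulrDr lerD2l ler_wpM2l //; lra.
lra.
Unshelve. all: end_near. Qed.

End est.


Lemma key_conv {R : realType} (a b : \bar R) (f : R -> R) (e : R) :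
  F1 a b f -> 0 < e -> [set x : R | 1 - e < x < 1 + e] `<=` oitv a b ->
  strictly_convex_on f [set x : R | 1 - e < x < 1 + e] ->
  forall d (T : measurableType d) (Pn : nat -> probability T R) (P : probability T R)
    (g : T -> R) (M : R), 0 < M -> measurable_fun setT g -> (forall x, `|g x| <= M) ->
  (fdiv a b f (Pn n) P @[n --> \oo] --> 0%E \/
   fdiv a b f P (Pn n) @[n --> \oo] --> 0%E) ->
  (\int[Pn n]_x (g x)%:E)%E @[n --> \oo] --> (\int[P]_x (g x)%:E)%E.
Proof.
move=> hF e0 sub scf d T Pn P g M M0 mg hM hD.
have [s hs] := subgrad a b f e hF e0 sub.
have bg : [bounded g x | x in setT].
  exists M; split; first exact: num_real.
  by move=> x Mx y _ /=; exact: le_trans (hM y) (ltW Mx).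
have fin (mu : probability T R) : (\int[mu]_x (g x)%:E)%E \is a fin_num.
  apply: (integrable_fin_num measurableT).
  apply: measurable_bounded_integrable => //.
  exact: fin_num_fun_lty (fin_num_measure _).
rewrite -(fineK (fin P)).
case: hD => hD.
- apply: (@conv_lemma R _ _ (fun n => fdiv a b f (Pn n) P) M e M0 e0 hD).
  move=> dl hdl; have [m m0 pb] := exists_m a b f e s hF e0 sub scf hs dl hdl.
  exists (dl / m); first by rewrite ltW // divr_gt0 //; case/andP: hdl.
  move=> n; rewrite fineK; last exact: fin.
  apply: (est a b f s dl m M g hF _ m0 M0 pb mg hM).
  by case/andP: hdl.
- apply: (@conv_lemma R _ _ (fun n => fdiv a b f P (Pn n)) M e M0 e0 hD).
  move=> dl hdl; have [m m0 pb] := exists_m a b f e s hF e0 sub scf hs dl hdl.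
  exists (dl / m); first by rewrite ltW // divr_gt0 //; case/andP: hdl.
  move=> n; rewrite fineK; last exact: fin.
  rewrite abseC; [|exact: fin|exact: fin].
  apply: (est a b f s dl m M g hF _ m0 M0 pb mg hM).
  by case/andP: hdl.
Qed.

Theorem theorem10 (R : realType) (a b : \bar R) (f : R -> R) :
  F1 a b f ->
  (interior [set y : R | (legendre a b f y < +oo)%E]) (rderiv f 1) ->
  (exists2 e : R, 0 < e &
     [set x : R | 1 - e < x < 1 + e] `<=` oitv a b /\
     strictly_convex_on f [set x : R | 1 - e < x < 1 + e]) ->
  (forall (d : measure_display) (T : measurableType d)
          (Pn : nat -> probability T R) (P : probability T R),
     (fdiv a b f (Pn n) P @[n --> \oo] --> 0%E \/
      fdiv a b f P (Pn n) @[n --> \oo] --> 0%E) ->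
     forall A : set T, measurable A -> Pn n A @[n --> \oo] --> P A)
  /\
  (forall (T : pseudoPMetricType R), hausdorff_space T ->
   forall (Pn : nat -> probability (g_sigma_algebraType (@open T)) R)
          (P : probability (g_sigma_algebraType (@open T)) R),
     (fdiv a b f (Pn n) P @[n --> \oo] --> 0%E \/
      fdiv a b f P (Pn n) @[n --> \oo] --> 0%E) ->
     forall g : T -> R, continuous g -> (exists M : R, forall x, `|g x| <= M) ->
       (\int[Pn n]_x (g x)%:E)%E @[n --> \oo] --> (\int[P]_x (g x)%:E)%E).
Proof.
move=> hF _ [e e0 [sub scf]]; split.
- move=> d T Pn P hD A mA.
  have := @key_conv R a b f e hF e0 sub scf d T Pn P (\1_A) 1 ltr01 (measurable_indic mA) _ hD.
  have hI (mu : probability T R) : (\int[mu]_x (\1_A x)%:E)%E = mu A.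
    by rewrite integral_indic // setIT.
  rewrite hI.
  have -> : (fun n => \int[Pn n]_x (\1_A x)%:E)%E = (fun n => Pn n A).
    by apply: funext => n; rewrite hI.
  apply.
  by move=> x; rewrite indicE; case: (x \in A); rewrite ?normr1 ?normr0.
- move=> T _ Pn P hD g cg [M hM].
  apply: (@key_conv R a b f e hF e0 sub scf _ _ Pn P g (`|M| + 1)) => //.
  + apply: (measurability (@RGenOpens.G R)) => [|/= _ [_] [x] [y] -> <-].
      exact: RGenOpens.measurableE.
    apply: sub_sigma_algebra; rewrite setTI.
    by move/continuousP : cg; apply; exact: interval_open.
  + by move=> x; rewrite (le_trans (hM x)) // ler_wpDr // ler_norm.
Qed.
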